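(* Let $\mathbb{F}$ be an algebraically closed field of characteristic zero, $J_1=E_{12}$ and $J_2=E_{12}+E_{23}$. Let $\underline{A}=(J_2,A_2,A_3)$ and $\underline{B}=(J_1,B_2,B_3)$ be elements of $\mathcal{N}_3^3$ such that $f(\underline{A})=f(\underline{B})$ for all $f\in S_{3,3}$. Then $f(\underline{A})=f(\underline{B})$ for all $f\in P_{3,3}$.
   Context: $E_{ij}$ is the $3\times3$ matrix unit. $\mathcal{N}_3^3$ is the set of triples of nilpotent $3\times3$ matrices over $\mathbb{F}$. $\mathrm{tr}(Y_{i_1}\cdots Y_{i_r})$ denotes the function $\underline{A}\mapsto\mathrm{tr}(A_{i_1}\cdots A_{i_r})$. $S_{3,3}$ is the set consisting of: $\mathrm{tr}(Y_iY_j),\ \mathrm{tr}(Y_i^2Y_j),\ \mathrm{tr}(Y_iY_j^2),\ \mathrm{tr}(Y_i^2Y_j^2),\ \mathrm{tr}(Y_i^2Y_j^2Y_iY_j)$ for $1\le i<j\le3$; $\mathrm{tr}(Y_1Y_2Y_3)$, $\mathrm{tr}(Y_1Y_3Y_2)$; $\mathrm{tr}(Y_i^2Y_jY_k)$ for $\{i,j,k\}=\{1,2,3\}$; $\mathrm{tr}(Y_1^2Y_2Y_1Y_3)$, $\mathrm{tr}(Y_2^2Y_1Y_2Y_3)$, $\mathrm{tr}(Y_3^2Y_1Y_3Y_2)$. $P_{3,3}=S_{3,3}\sqcup P'_{3,3}$, where $P'_{3,3}$ consists of $\mathrm{tr}(Y_i^2Y_j^2Y_k)$ and $\mathrm{tr}(Y_i^2Y_j^2Y_iY_k)$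 for $\{i,j,k\}=\{1,2,3\}$, and $\mathrm{tr}(Y_1^2Y_2^2Y_3^2)$. *)

(* Defs.v *)
From mathcomp Require Import all_boot all_order all_algebra.
Set Implicit Arguments. Unset Strict Implicit. Unset Printing Implicit Defensive.
Import GRing.Theory.
Local Open Scope ring_scope.

Definition nilpotent_mx (F : fieldType) (A : 'M[F]_3) : Prop :=
  exists n : nat, A ^+ n = 0.

(* Matrix units of 'M_3, indexed from 1 as in the paper: E i j. *)
Definition E (F : fieldType) (i j : nat) : 'M[F]_3 :=
  delta_mx (inord i.-1) (inord j.-1).

Definition J1 (F : fieldType) : 'M[F]_3 := E F 1 2.
Definition J2 (F : fieldType) : 'M[F]_3 := E F 1 2 + E F 2 3.

Definition Ysel (F : fieldType) (A1 A2 A3 : 'M[F]_3) (k : nat) : 'M[F]_3 :=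
  match k with 1 => A1 | 2 => A2 | 3 => A3 | _ => 0 end.

(* tr(Y_{i_1} ... Y_{i_r}) evaluated at (A1,A2,A3), for the word [:: i_1; ...; i_r]. *)
Definition trw (F : fieldType) (A1 A2 A3 : 'M[F]_3) (w : seq nat) : F :=
  \tr (\prod_(k <- w) Ysel A1 A2 A3 k).

Definition pairs3 : seq (nat * nat) := [:: (1,2); (1,3); (2,3)]%N.
Definition perms3 : seq (nat * nat * nat) :=
  [:: (1,2,3); (1,3,2); (2,1,3); (2,3,1); (3,1,2); (3,2,1)]%N.

Definition S33 : seq (seq nat) :=
  flatten [seq [:: [:: p.1; p.2];
                   [:: p.1; p.1; p.2];
                   [:: p.1; p.2; p.2];
                   [:: p.1; p.1; p.2; p.2];
                   [:: p.1; p.1; p.2; p.2; p.1; p.2]] | p <- pairs3]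
  ++ [:: [:: 1; 2; 3]; [:: 1; 3; 2]]%N
  ++ [seq [:: t.1.1; t.1.1; t.1.2; t.2] | t <- perms3]
  ++ [:: [:: 1; 1; 2; 1; 3]; [:: 2; 2; 1; 2; 3]; [:: 3; 3; 1; 3; 2]]%N.

Definition P33' : seq (seq nat) :=
  [seq [:: t.1.1; t.1.1; t.1.2; t.1.2; t.2] | t <- perms3]
  ++ [seq [:: t.1.1; t.1.1; t.1.2; t.1.2; t.1.1; t.2] | t <- perms3]
  ++ [:: [:: 1; 1; 2; 2; 3; 3]]%N.

Definition P33 : seq (seq nat) := S33 ++ P33'.

(* Main.v *)
Require Import Defs.
From mathcomp Require Import all_boot all_order all_algebra.
From mathcomp Require Import ring.
Import GRing.Theory.
Local Open Scope ring_scope.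
Set Implicit Arguments. Unset Strict Implicit. Unset Printing Implicit Defensive.

Definition o0 : 'I_3 := @Ordinal 3 0 isT.
Definition o1 : 'I_3 := @Ordinal 3 1 isT.
Definition o2 : 'I_3 := @Ordinal 3 2 isT.

Lemma ord3P (P : 'I_3 -> Prop) : P o0 -> P o1 -> P o2 -> forall i, P i.
Proof.
move=> H0 H1 H2 [[|[|[|m]]] Hm] //.
- by rewrite (_ : Ordinal Hm = o0) //; apply: val_inj.
- by rewrite (_ : Ordinal Hm = o1) //; apply: val_inj.
- by rewrite (_ : Ordinal Hm = o2) //; apply: val_inj.
Qed.

Section M3.
Variable R : comNzRingType.
Implicit Types A B : 'M[R]_3.

Lemma mul3 A B i j : (A * B) i j = A i o0 * B o0 j + A i o1 * B o1 j + A i o2 * B o2 j.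
Proof.
rewrite -mulmxE mxE !big_ord_recr big_ord0 /= add0r.
have -> : (widen_ord (leqnSn 2) (widen_ord (leqnSn 1) ord_max)) = o0 by apply: val_inj.
have -> : (widen_ord (leqnSn 2) ord_max) = o1 by apply: val_inj.
by have -> : (@ord_max 2) = o2 by apply: val_inj.
Qed.

Lemma tr3 A : \tr A = A o0 o0 + A o1 o1 + A o2 o2.
Proof.
rewrite /mxtrace !big_ord_recr big_ord0 /= add0r.
have -> : (widen_ord (leqnSn 2) (widen_ord (leqnSn 1) ord_max)) = o0 by apply: val_inj.
have -> : (widen_ord (leqnSn 2) ord_max) = o1 by apply: val_inj.
by have -> : (@ord_max 2) = o2 by apply: val_inj.
Qed.

Lemma scal3 (a : R) i j : (a%:M : 'M[R]_3) i j = a * (i == j)%:R.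
Proof. by rewrite mxE mulr_natr. Qed.

End M3.

Lemma J2E (F : fieldType) i j : J2 F i j = ((nat_of_ord j == (nat_of_ord i).+1)%:R).
Proof.
rewrite /J2 /E !mxE /=.
move: i j; apply: ord3P; apply: ord3P; rewrite /= -!val_eqE /= ?inordK //.
all: by rewrite /= ?addr0 ?add0r.
Qed.

Lemma J1E (F : fieldType) i j : J1 F i j = (((nat_of_ord i == 0%N) && (nat_of_ord j == 1%N))%:R).
Proof.
rewrite /J1 /E !mxE /=.
move: i j; apply: ord3P; apply: ord3P; rewrite /= -!val_eqE /= ?inordK //.
all: by rewrite /= ?addr0 ?add0r.
Qed.
Lemma charX (F : closedFieldType) n (N : 'M[F]_n.+1) k :
  N ^+ k = 0 -> char_poly N = 'X^(n.+1).
Proof.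
move=> Nk.
have [r Hr] := closed_field_poly_normal (char_poly N).
rewrite (monicP (char_poly_monic N)) scale1r in Hr.
have Hz : forall z, z \in r -> z = 0.
  move=> z zr.
  have : root (char_poly N) z by rewrite Hr root_prod_XsubC.
  rewrite -eigenvalue_root_char => /eigenvalueP [v Hv vnz].
  have Hm : forall m, v *m N ^+ m = z ^+ m *: v.
    elim=> [|m IH]; first by rewrite !expr0 mulmx1 scale1r.
    by rewrite exprSr -[N ^+ m * N]/(N ^+ m *m N) mulmxA IH -scalemxAl Hv scalerA -exprSr.
  move: (Hm k); rewrite Nk mulmx0 => /eqP; rewrite eq_sym scaler_eq0 (negPf vnz) orbF.
  by rewrite expf_eq0 => /andP [_ /eqP].
have HX : \prod_(z <- r) ('X - z%:P) = 'X^(size r) :> {poly F}.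
  elim: r Hz {Hr} => [|z r IH] Hz; first by rewrite big_nil expr0.
  rewrite big_cons IH; last by move=> y yr; apply: Hz; rewrite inE yr orbT.
  by rewrite (Hz z) ?inE ?eqxx // subr0 exprS.
rewrite Hr HX; congr ('X^ _).
have := size_char_poly N; rewrite Hr HX size_polyXn.
by case.
Qed.

Lemma nil_pow (F : closedFieldType) n (N : 'M[F]_n.+1) k :
  N ^+ k = 0 -> N ^+ n.+1 = 0.
Proof.
move=> /charX HN; have := Cayley_Hamilton N.
by rewrite HN rmorphXn /= horner_mx_X.
Qed.

Lemma nil_tr (F : closedFieldType) n (N : 'M[F]_n.+1) k :
  N ^+ k = 0 -> \tr N = 0.
Proof.
move=> /charX HN; have := char_poly_trace N (ltn0Sn n).
rewrite HN coefXn /= eqn_leq ltnn andbF => /eqP.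
by rewrite eq_sym oppr_eq0 => /eqP.
Qed.
Section CH.
Variable R : comNzRingType.
Implicit Types N M A B : 'M[R]_3.

Lemma addE A B i j : (A + B) i j = A i j + B i j. Proof. by rewrite mxE. Qed.
Lemma oppE A i j : (- A) i j = - A i j. Proof. by rewrite mxE. Qed.
Lemma sclE (a : R) A i j : (a *: A) i j = a * A i j. Proof. by rewrite mxE. Qed.

Definition c2 N := N o0 o0 * N o1 o1 - N o0 o1 * N o1 o0 + N o0 o0 * N o2 o2
  - N o0 o2 * N o2 o0 + N o1 o1 * N o2 o2 - N o1 o2 * N o2 o1.

Lemma CHfull N M :
  N*N*M + N*M*N + M*N*N - (\tr M *: (N*N) + \tr (N*M) *: N + (\tr (N*N*M))%:M)
  = \tr N *: (N*M+M*N) - (\tr N * \tr M) *: N - c2 N *: M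
    - (\tr N * \tr (N*M))%:M + (c2 N * \tr M)%:M.
Proof.
apply/matrixP; apply: ord3P; apply: ord3P;
rewrite !(addE, oppE, sclE, scal3, mul3, tr3) /c2 /=; ring.
Qed.
End CH.

Section Nil.
Variable R : fieldType.
Implicit Types N M A B : 'M[R]_3.

Lemma scalM1 (a : R) : (a%:M : 'M[R]_3) = a *: 1.
Proof. by rewrite scalemx1. Qed.

Lemma CHp N M : (2%:R : R) != 0 -> \tr N = 0 -> \tr (N*N) = 0 ->
  N*N*M + N*M*N + M*N*N = \tr M *: (N*N) + \tr (N*M) *: N + \tr (N*N*M) *: 1.
Proof.
move=> h2 t0 s0.
have c0 : c2 N = 0.
  have e : \tr (N*N) = \tr N ^+ 2 - 2%:R * c2 N by rewrite !tr3 !mul3 /c2; ring.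
  move: e; rewrite t0 s0 expr0n /= sub0r => /eqP; rewrite eq_sym oppr_eq0 mulf_eq0 (negPf h2) /=.
  by move/eqP.
have := CHfull N M; rewrite !scalM1 t0 c0 !(mul0r, scale0r, subr0, addr0, sub0r).
by rewrite oppr0 => /eqP; rewrite subr_eq0 => /eqP.
Qed.

Lemma I1 N M : N*N*N = 0 ->
  (forall M, N*N*M + N*M*N + M*N*N = \tr M *: (N*N) + \tr (N*M) *: N + \tr (N*N*M) *: 1) ->
  N*N*M*(N*N) = \tr (N*N*M) *: (N*N).
Proof.
move=> H3 HCH.
have H3' : forall X, X*N*N*N = 0 by move=> X; rewrite -!mulrA [N*(N*N)]mulrA H3 mulr0.
have := congr1 (fun X => N*X*N) (HCH M).
rewrite /= !(mulrDl, mulrDr) -!(scalerAr, scalerAl) !mulrA !H3' H3 !mul0r mulr1.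
by rewrite !scaler0 !add0r !addr0.
Qed.

Lemma I2 N M : 
  (forall M, N*N*M + N*M*N + M*N*N = \tr M *: (N*N) + \tr (N*M) *: N + \tr (N*N*M) *: 1) ->
  N*M = 0 -> M*(N*N) = \tr M *: (N*N).
Proof.
move=> HCH H.
have h1 : N*N*M = 0 by rewrite -mulrA H mulr0.
have h2 : N*M*N = 0 by rewrite H mul0r.
have := HCH M; rewrite h1 h2 H !mxtrace0 !scale0r !addr0 !add0r.
by rewrite mulrA.
Qed.

Lemma deltaE (j k a b : 'I_3) : (delta_mx j k : 'M[R]_3) a b = ((nat_of_ord a == j) && (nat_of_ord b == k))%:R.
Proof. by rewrite mxE. Qed.

Lemma YDX (Y X : 'M[R]_3) i j k l : (Y * delta_mx j k * X) i l = Y i j * X k l.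
Proof.
move: i j k l; apply: ord3P; apply: ord3P; apply: ord3P; apply: ord3P;
rewrite !mul3 !deltaE /=; ring.
Qed.

Lemma prime3 (Y X : 'M[R]_3) : (forall M, Y*M*X = 0) -> Y = 0 \/ X = 0.
Proof.
move=> H.
case: (eqVneq Y 0) => [->|]; first by left.
move/matrix0Pn => [i [j Hij]]; right.
apply/matrixP => k l; rewrite mxE.
have := congr1 (fun Z : 'M[R]_3 => Z i l) (H (delta_mx j k)).
rewrite /= (YDX Y X i j k l) mxE => /eqP; rewrite mulf_eq0 (negPf Hij) /= => /eqP ->.
by [].
Qed.

End Nil.

Section Key.
Variable R : fieldType.
Implicit Types N M U V : 'M[R]_3.

Definition good N := [/\ N*N*N = 0, \tr N = 0 & \tr (N*N) = 0].

Lemma key U V : (2%:R : R) != 0 -> good U -> good V ->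
  \tr (U*U*(V*V)) = 0 -> \tr (U*(V*V)) = 0 -> V*V*(U*U) = 0.
Proof.
move=> h2 [U3 Ut Us] [V3 Vt Vs] tPQ tUQ.
have HU := fun M => CHp M h2 Ut Us.
have HV := fun M => CHp M h2 Vt Vs.
have I1U : forall M, U*U*M*(U*U) = \tr (U*U*M) *: (U*U) by move=> M; apply: I1.
have I1V : forall M, V*V*M*(V*V) = \tr (V*V*M) *: (V*V) by move=> M; apply: I1.
have I2U : forall M, U*M = 0 -> M*(U*U) = \tr M *: (U*U) by move=> M; apply: I2.
have PQP : U*U*(V*V)*(U*U) = 0 by rewrite I1U tPQ scale0r.
have PQP' : U*U*V*V*U*U = 0 by move: PQP; rewrite !mulrA.
have sa : forall M, U*U*(V*V)*M*(V*V*(U*U)) = 0.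
  move=> M.
  have -> : U*U*(V*V)*M*(V*V*(U*U)) = U*U*(V*V*M*(V*V))*(U*U) by rewrite !mulrA.
  by rewrite I1V -scalerAr -scalerAl !mulrA PQP' scaler0.
case: (prime3 sa) => [PQ0|//].
have UQP : U*(V*V)*(U*U) = 0.
  by rewrite I2U ?tUQ ?scale0r // mulrA PQ0.
have UQP' : U*V*V*U*U = 0 by move: UQP; rewrite !mulrA.
have sc : forall M, U*(V*V)*M*(V*V*(U*U)) = 0.
  move=> M.
  have -> : U*(V*V)*M*(V*V*(U*U)) = U*(V*V*M*(V*V))*(U*U) by rewrite !mulrA.
  by rewrite I1V -scalerAr -scalerAl !mulrA UQP' scaler0.
case: (prime3 sc) => [UQ0|//].
by rewrite I2U // Vs scale0r.
Qed.

End Key.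

Section Words.
Variable F : fieldType.
Implicit Types A B P M W : 'M[F]_3.

Definition Zr M := forall j, M o2 j = 0.
Definition Sq1 P := forall i, P i o0 = 0 /\ P i o1 = 0.
Definition Cl M := forall i, M i o0 = 0.
Definition Sq2 P := forall j, P o1 j = 0 /\ P o2 j = 0.

Lemma ZrM A B : Zr A -> Zr (A * B).
Proof. by move=> h j; rewrite mul3 !h; ring. Qed.
Lemma ClM A B : Cl B -> Cl (A * B).
Proof. by move=> h i; rewrite mul3 !h; ring. Qed.
Lemma PZ P M : Sq1 P -> Zr M -> P * M = 0.
Proof.
move=> hP hM; apply/matrixP => i j; rewrite mul3 mxE.
by case: (hP i) => -> ->; rewrite hM; ring.
Qed.
Lemma CP P M : Sq2 P -> Cl M -> M * P = 0.
Proof.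
move=> hP hM; apply/matrixP => i j; rewrite mul3 mxE.
by case: (hP j) => -> ->; rewrite hM; ring.
Qed.

Lemma Ysel0 A1 A2 A3 k : k \notin [:: 1; 2; 3]%N -> Ysel A1 A2 A3 k = 0.
Proof. by case: k => [|[|[|[|k]]]]. Qed.

Lemma wordI A1 A2 A3 k w : Zr A1 -> Zr A2 -> Zr A3 ->
  Sq1 (Ysel A1 A2 A3 k * Ysel A1 A2 A3 k) -> w != [::] -> trw A1 A2 A3 (k::k::w) = 0.
Proof.
move=> h1 h2 h3 hP; case: w => [//|k' w] _.
rewrite /trw !big_cons mulrA PZ ?mxtrace0 //; apply: ZrM.
case: k' => [|[|[|[|k']]]] //= j; by rewrite mxE.
Qed.

Lemma ClP A1 A2 A3 w : Cl A1 -> Cl A2 -> Cl A3 -> w != [::] ->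
  Cl (\prod_(k <- w) Ysel A1 A2 A3 k).
Proof.
move=> h1 h2 h3; elim: w => [//|k w IH] _.
rewrite big_cons; case: w IH => [_|k' w] .
  rewrite big_nil mulr1; case: k => [|[|[|[|k]]]] //= j; by rewrite mxE.
by move=> IH; apply: ClM; apply: IH.
Qed.

Lemma wordII A1 A2 A3 k w : Cl A1 -> Cl A2 -> Cl A3 ->
  Sq2 (Ysel A1 A2 A3 k * Ysel A1 A2 A3 k) -> w != [::] -> trw A1 A2 A3 (k::k::w) = 0.
Proof.
move=> h1 h2 h3 hP hw.
rewrite /trw !big_cons mulrA -mulmxE mxtrace_mulC mulmxE CP ?mxtrace0 //.
exact: ClP.
Qed.

End Words.

Lemma lc0 (R : comNzRingType) (q a : R) : q = 0 -> a = q -> a = 0.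
Proof. by move=> -> . Qed.

Section Cases.
Variable F : fieldType.
Implicit Types X Y : 'M[F]_3.

Lemma caseI_mat X : good X -> X o2 o0 = 0 -> X o2 o1 = 0 -> Zr X /\ Sq1 (X*X).
Proof.
move=> [X3 Xt Xs] h20 h21.
have h22 : X o2 o2 = 0.
  have : (X*X*X) o2 o2 = X o2 o2 ^+ 3 by rewrite !mul3 h20 h21; ring.
  by rewrite X3 mxE => /esym/eqP; rewrite expf_eq0 /= => /eqP.
have h11 : X o1 o1 = - X o0 o0.
  by move: Xt; rewrite tr3 h22 addr0 => /eqP; rewrite addrC addr_eq0 => /eqP.
have Hq : X o0 o0 * X o0 o0 + X o0 o1 * X o1 o0 = 0.
  have : (X*X*X*X) o0 o0 = (X o0 o0 * X o0 o0 + X o0 o1 * X o1 o0)^+2.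
    by rewrite !mul3 h20 h21 h22 h11; ring.
  by rewrite X3 mul0r mxE => /esym/eqP; rewrite expf_eq0 /= => /eqP.
split; first by apply: ord3P.
apply: ord3P; split; rewrite !mul3 ?h20 ?h21 ?h22 ?h11;
  first [ring | (apply: (lc0 Hq); ring)].
Qed.

Lemma caseII_mat X : good X -> X o2 o0 = 0 -> X o1 o0 = 0 -> Cl X /\ Sq2 (X*X).
Proof.
move=> [X3 Xt Xs] h20 h10.
have h00 : X o0 o0 = 0.
  have : (X*X*X) o0 o0 = X o0 o0 ^+ 3 by rewrite !mul3 h20 h10; ring.
  by rewrite X3 mxE => /esym/eqP; rewrite expf_eq0 /= => /eqP.
have h22 : X o2 o2 = - X o1 o1.
  by move: Xt; rewrite tr3 h00 add0r addrC => /eqP; rewrite addr_eq0 => /eqP.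
have Hq : X o1 o1 * X o1 o1 + X o1 o2 * X o2 o1 = 0.
  have : (X*X*X*X) o1 o1 = (X o1 o1 * X o1 o1 + X o1 o2 * X o2 o1)^+2.
    by rewrite !mul3 h20 h10 h00 h22; ring.
  by rewrite X3 mul0r mxE => /esym/eqP; rewrite expf_eq0 /= => /eqP.
split; first by apply: ord3P.
apply: ord3P; split; rewrite !mul3 ?h20 ?h10 ?h00 ?h22;
  first [ring | (apply: (lc0 Hq); ring)].
Qed.

Lemma J2sq1 : Zr (J2 F) /\ Sq1 (J2 F * J2 F).
Proof.
split; first by apply: ord3P; rewrite J2E.
by apply: ord3P; split; rewrite !mul3 !J2E /=; ring.
Qed.

Lemma J2sq2 : Cl (J2 F) /\ Sq2 (J2 F * J2 F).
Proof.
split; first by apply: ord3P; rewrite J2E.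
by apply: ord3P; split; rewrite !mul3 !J2E /=; ring.
Qed.

Lemma J1sq : J1 F * J1 F = 0.
Proof.
by apply/matrixP; apply: ord3P; apply: ord3P; rewrite mul3 !J1E mxE /=; ring.
Qed.

End Cases.

Lemma goodP (F : closedFieldType) (N : 'M[F]_3) : nilpotent_mx N -> good N.
Proof.
move=> [k Hk].
have N3 : N ^+ 3 = 0 := nil_pow Hk.
split.
- by rewrite -N3 !exprS expr0 mulr1 mulrA.
- exact: nil_tr Hk.
- apply: (@nil_tr _ _ _ 3).
  by rewrite -expr2 -exprM (_ : (2 * 3 = 3 + 3)%N) // exprD N3 mul0r.
Qed.

Lemma trJJ (F : fieldType) (M : 'M[F]_3) : \tr (J2 F * (J2 F * M)) = M o2 o0.
Proof. by rewrite tr3 !mul3 !J2E /=; ring. Qed.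

Lemma trwJ1 (F : fieldType) (U V : 'M[F]_3) w : trw (J1 F) U V (1%N :: 1%N :: w) = 0.
Proof. by rewrite /trw !big_cons mulrA J1sq mul0r mxtrace0. Qed.

Theorem lemma6p1 (F : closedFieldType) (charF0 : [pchar F] =i pred0)
    (A2 A3 B2 B3 : 'M[F]_3) :
  nilpotent_mx A2 -> nilpotent_mx A3 -> nilpotent_mx B2 -> nilpotent_mx B3 ->
  (forall w, w \in S33 -> trw (J2 F) A2 A3 w = trw (J1 F) B2 B3 w) ->
  forall w, w \in P33 -> trw (J2 F) A2 A3 w = trw (J1 F) B2 B3 w.
Proof.
move=> /goodP gX /goodP gY /goodP gU /goodP gV hS w.
rewrite mem_cat => /orP [/hS // | hw].
have h2 : (2%:R : F) != 0 by move/pcharf0P: charF0 => ->.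
set X := A2; set Y := A3; set U := B2; set V := B3.
have hA : forall w, (1%N :: 1%N :: w) \in S33 -> trw (J2 F) X Y (1%N :: 1%N :: w) = 0.
  by move=> w' hw'; rewrite hS // trwJ1.
have h20 : X o2 o0 = 0.
  by move: (hA [:: 2%N] isT); rewrite /trw !big_cons big_nil /= trJJ mulr1.
have y20 : Y o2 o0 = 0.
  by move: (hA [:: 3%N] isT); rewrite /trw !big_cons big_nil /= trJJ mulr1.
have e1 : X o2 o1 * X o1 o0 = 0.
  move: (hA [:: 2; 2]%N isT); rewrite /trw !big_cons big_nil /= trJJ mulr1.
  by rewrite mul3 h20; move=> <-; ring.
have e4 : Y o2 o1 * Y o1 o0 = 0.
  move: (hA [:: 3; 3]%N isT); rewrite /trw !big_cons big_nil /= trJJ mulr1.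
  by rewrite mul3 y20; move=> <-; ring.
have e2 : X o2 o1 * Y o1 o0 = 0.
  move: (hA [:: 2; 3]%N isT); rewrite /trw !big_cons big_nil /= trJJ mulr1.
  by rewrite mul3 h20 y20; move=> <-; ring.
have e3 : Y o2 o1 * X o1 o0 = 0.
  move: (hA [:: 3; 2]%N isT); rewrite /trw !big_cons big_nil /= trJJ mulr1.
  by rewrite mul3 h20 y20; move=> <-; ring.
have Asq : forall k w, k \in [:: 1; 2; 3]%N -> w != [::] ->
    trw (J2 F) X Y (k :: k :: w) = 0.
  have [[x21 y21] | [x10 y10]] :
      (X o2 o1 = 0 /\ Y o2 o1 = 0) \/ (X o1 o0 = 0 /\ Y o1 o0 = 0).
  - case: (eqVneq (X o2 o1) 0) => hx; last first.
      right; split.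
        by move/eqP: e1; rewrite mulf_eq0 (negPf hx) /= => /eqP.
      by move/eqP: e2; rewrite mulf_eq0 (negPf hx) /= => /eqP.
    case: (eqVneq (Y o2 o1) 0) => hy; first by left.
    right; split.
      by move/eqP: e3; rewrite mulf_eq0 (negPf hy) /= => /eqP.
    by move/eqP: e4; rewrite mulf_eq0 (negPf hy) /= => /eqP.
  - have [zX sX] := caseI_mat gX h20 x21.
    have [zY sY] := caseI_mat gY y20 y21.
    have [zJ sJ] := J2sq1 F.
    move=> k w' hk hw'; apply: wordI => //.
    by move: hk; rewrite !inE => /or3P [] /eqP ->.
  - have [zX sX] := caseII_mat gX h20 x10.
    have [zY sY] := caseII_mat gY y20 y10.
    have [zJ sJ] := J2sq2 F.
    move=> k w' hk hw'; apply: wordII => //.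
    by move: hk; rewrite !inE => /or3P [] /eqP ->.
have b223 : \tr (U*U*V) = 0.
  have := hS [:: 2; 2; 3]%N isT; rewrite Asq // /trw !big_cons big_nil /= mulr1 mulrA.
  by move<-.
have b2233 : \tr (U*U*(V*V)) = 0.
  have := hS [:: 2; 2; 3; 3]%N isT; rewrite Asq // /trw !big_cons big_nil /= mulr1 !mulrA.
  by move<-.
have b233 : \tr (U*(V*V)) = 0.
  have := hS [:: 2; 3; 3]%N isT.
  have -> : trw (J2 F) X Y [:: 2; 3; 3]%N = trw (J2 F) X Y [:: 3; 3; 2]%N.
    by rewrite /trw !big_cons big_nil /= !mulr1 -mulmxE mxtrace_mulC !mulmxE mulrA.
  by rewrite Asq // /trw !big_cons big_nil /= mulr1; move<-.
have VVUU : V*V*(U*U) = 0 by apply: key.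
have UUVV : U*U*(V*V) = 0.
  apply: key => //; first by rewrite -mulmxE mxtrace_mulC.
  by rewrite -mulmxE mxtrace_mulC mulmxE.
have JJ' : forall W, J1 F * (J1 F * W) = 0 by move=> W; rewrite mulrA J1sq mul0r.
have UV' : forall W, U * (U * (V * (V * W))) = 0.
  move=> W; transitivity (U*U*(V*V)*W); first by rewrite !mulrA.
  by rewrite UUVV mul0r.
have VU' : forall W, V * (V * (U * (U * W))) = 0.
  move=> W; transitivity (V*V*(U*U)*W); first by rewrite !mulrA.
  by rewrite VVUU mul0r.
move: hw; rewrite /P33' /= !inE.
by repeat (case/orP; [move/eqP ->; rewrite Asq // /trw !big_cons big_nil /= ?JJ' ?UV' ?VU' ?mulr0 ?mxtrace0 // | ]);
  move/eqP ->; rewrite Asq // /trw !big_cons big_nil /= ?JJ' ?UV' ?VU' ?mulr0 ?mxtrace0.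
Qed.
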